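(* Let $X=\{x_1,\dots,x_M\}\subset\mathbb{R}^n$ be finite and $\phi_1,\dots,\phi_N$ real functions on $X$ such that $V$, $V_{i,j}=\phi_j(x_i)$, has rank $N$. For every $w\in\mathbb{R}^M_{\geq0}$ at which $E$ is defined (i.e. $\det G(w)>0$) and every $u\in\mathbb{R}^M$, $$u^t\,\mathrm{Hess}\,E(w)\,u=0\iff \sum_{i=1}^M u_i\,\phi_h(x_i)\phi_k(x_i)=0\ \text{ for all } h,k\in\{1,\dots,N\},$$ i.e. if and only if $V(\Phi^2;X)^tu=0$, where $V(\Phi^2;X)$ is the matrix whose columns are the values at $x_1,\dots,x_M$ of a basis of $\Phi^2=\operatorname{span}\{\phi_h\phi_k\}$.
   Context: $G(w)=V^t\operatorname{diag}(w)V$ and $E(w)=-\frac1N\log\det G(w)+\|w\|_1$ for $w$ with $\det G(w)>0$. *)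

(* Defs.v *)
From HB Require Import structures.
From mathcomp Require Import all_boot all_order all_algebra.
From mathcomp Require Import all_classical all_reals all_analysis.
Set Implicit Arguments. Unset Strict Implicit. Unset Printing Implicit Defensive.
Import Order.TTheory GRing.Theory Num.Theory.
Local Open Scope ring_scope.

Section Defs.
Variables (R : realType) (M N : nat).

Definition Gmat (V : 'M[R]_(M, N)) (w : 'rV[R]_M) : 'M[R]_N :=
  V^T *m diag_mx w *m V.

(* E(w) = -(1/N) log det G(w) + ||w||_1, where on the nonnegative orthant
   ||w||_1 = \sum_i w_i. *)
Definition Efun (V : 'M[R]_(M, N)) (w : 'rV[R]_M) : R :=
  - (N%:R)^-1 * ln (\det (Gmat V w)) + \sum_(i < M) w ord0 i.

Definition evec (j : 'I_M) : 'rV[R]_M := delta_mx ord0 j.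

Definition partial (j : 'I_M) (f : 'rV[R]_M -> R) (w : 'rV[R]_M) : R :=
  derive1 (fun t : R => f (w + t *: evec j)) 0.

Definition hessian (f : 'rV[R]_M -> R) (w : 'rV[R]_M) : 'M[R]_M :=
  \matrix_(i, j) partial i (partial j f) w.

Definition hess_form (f : 'rV[R]_M -> R) (w u : 'rV[R]_M) : R :=
  (u *m hessian f w *m u^T) ord0 ord0.

End Defs.

(* Main.v *)
Require Import Defs.
From HB Require Import structures.
From mathcomp Require Import all_boot all_order all_algebra.
From mathcomp Require Import all_classical all_reals all_analysis.
From mathcomp Require Import ring lra.
Import Order.TTheory GRing.Theory Num.Theory.
Local Open Scope ring_scope.

Section Mx.
Variable R : realType.

Lemma sylvester_det (N : nat) (x : 'cV[R]_N) (y : 'rV[R]_N) :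
  \det (1%:M + x *m y) = 1 + (y *m x) 0 0.
Proof.
pose L : 'M[R]_(N + 1) := block_mx 1%:M 0 y 1%:M.
pose Mi : 'M[R]_(N + 1) := block_mx (1%:M + x *m y) x 0 1%:M.
pose Rt : 'M[R]_(N + 1) := block_mx 1%:M 0 (- y) 1%:M.
have E : L *m Mi *m Rt = block_mx 1%:M x 0 (1%:M + y *m x).
  rewrite /L /Mi /Rt !mulmx_block.
  rewrite !(mul1mx, mulmx1, mul0mx, mulmx0, addr0, add0r, mulmxDr, mulmxDl, mulmxN, mulNmx, mulmxA).
  congr block_mx; first by rewrite addrK.
    by rewrite [LHS]addrC addrA subrK addNr.
  by rewrite addrC.
have := congr1 determinant E.
rewrite !det_mulmx /L /Mi /Rt det_lblock det_ublock det_lblock det_ublock !det1 !mul1r !mulr1.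
by move=> ->; rewrite det_mx11 !mxE.
Qed.


Lemma det_rank1 (N : nat) (G : 'M[R]_N) (r : 'rV[R]_N) (t : R) :
  G \in unitmx ->
  \det (G + t *: (r^T *m r)) = \det G * (1 + t * (r *m invmx G *m r^T) 0 0).
Proof.
move=> uG.
have -> : G + t *: (r^T *m r) = G *m (1%:M + (t *: (invmx G *m r^T)) *m r).
  by rewrite mulmxDr mulmx1 -scalemxAl -scalemxAr !mulmxA mulmxV // mul1mx.
rewrite det_mulmx sylvester_det; congr (_ * (1 + _)).
by rewrite -scalemxAr mxE mulmxA.
Qed.

Lemma inv_rank1 (N : nat) (G : 'M[R]_N) (r : 'rV[R]_N) (t : R) :
  G \in unitmx -> 1 + t * (r *m invmx G *m r^T) 0 0 != 0 ->
  invmx (G + t *: (r^T *m r)) =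
  invmx G - (t / (1 + t * (r *m invmx G *m r^T) 0 0)) *:
     (invmx G *m r^T *m r *m invmx G).
Proof.
move=> uG nz.
set q := (r *m invmx G *m r^T) 0 0.
set X := _ - _.
have E : (G + t *: (r^T *m r)) *m X = 1%:M.
  have rq : r *m invmx G *m r^T = q%:M by rewrite {1}[r *m _ *m _]mx11_scalar.
  set P := invmx G.
  set c := t / (1 + t * q).
  have GP : G *m P = 1%:M by rewrite mulmxV.
  rewrite /X mulmxDl !mulmxBr GP -!scalemxAr !mulmxA GP mul1mx -!scalemxAl.
  have K : r^T *m r *m P *m r^T *m r *m P = q *: (r^T *m r *m P).
    rewrite -[r^T *m r *m P]mulmxA -[r^T *m (r *m P) *m r^T]mulmxA rq.
    by rewrite mul_mx_scalar -!scalemxAl mulmxA.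
  rewrite K !scalerA -/P -/c -addrA -scalerBl [X in _ + X]addrC -scalerBl.
  suff -> : t - c * t * q - c = 0 by rewrite scale0r addr0.
  rewrite /c; field; exact: nz.
have [uB _] := mulmx1_unit E.
by rewrite -[X]mul1mx -(mulVmx uB) -mulmxA E mulmx1.
Qed.


Lemma diag_mxZ n a (d : 'rV[R]_n) : diag_mx (a *: d) = a *: diag_mx d.
Proof. by apply/matrixP=> i j; rewrite !mxE mulrnAr. Qed.

Lemma diag_delta n (i : 'I_n) : diag_mx (delta_mx 0 i) = delta_mx i i :> 'M[R]_n.
Proof.
apply/matrixP=> a b; rewrite !mxE eqxx /=.
case: (eqVneq a i) => [->|ai]; last by rewrite /= mul0rn.
by rewrite eq_sym; case: (_ == _).
Qed.

Lemma Gmat_shift M N (V : 'M[R]_(M, N)) w (i : 'I_M) (t : R) :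
  Gmat V (w + t *: @evec R M i) = Gmat V w + t *: ((row i V)^T *m row i V).
Proof.
rewrite /Gmat /evec raddfD /= diag_mxZ mulmxDr mulmxDl -scalemxAr -scalemxAl.
congr (_ + _ *: _).
by rewrite diag_delta rowE trmx_mul trmx_delta -(mul_delta_mx (0 : 'I_1)) !mulmxA.
Qed.

Lemma sum_shift M (w : 'rV[R]_M) (j : 'I_M) (t : R) :
  \sum_(i < M) (w + t *: @evec R M j) 0 i = \sum_(i < M) w 0 i + t.
Proof.
rewrite /evec; under eq_bigr => i _ do rewrite !mxE.
rewrite big_split /=; congr (_ + _).
rewrite (bigD1 j) //= eqxx mulr1 big1 ?addr0 // => k /negbTE kj.
by rewrite kj mulr0.
Qed.

End Mx.

Section T.
Variable R : realType.

Lemma derive1_of (f : R -> R) (x d : R) : is_derive x 1 f d -> derive1 f x = d.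
Proof. by move=> H; rewrite derive1E derive_val. Qed.

Lemma test (a d q S : R) : 0 < d ->
  derive1 (fun t => a * ln (d * (1 + t * q)) + (S + t)) 0 = a * q + 1.
Proof.
move=> d0.
pose p : {poly R} := d%:P + (d * q) *: 'X.
pose p2 : {poly R} := S%:P + 'X.
have hp : forall t, p.[t] = d * (1 + t * q).
  by move=> t; rewrite /p !hornerE; ring.
have hp2 : forall t, p2.[t] = S + t.
  by move=> t; rewrite /p2 !hornerE.
have D : is_derive (0:R) 1 (a \*: (@ln R \o horner p) + horner p2)
   (a *: (p.[0]^-1 * (deriv p).[0]) + (deriv p2).[0]).
  apply: is_deriveD.
  apply: is_deriveZ; apply: is_derive1_comp.
  apply: is_derive1_ln; by rewrite /p !hornerE /= ?mulr0 ?addr0.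
match goal with |- derive1 ?f 0 = _ => have -> : f = (a \*: (@ln R \o horner p) + horner p2) end.
  apply/funext => t /=; transitivity (a * ln p.[t] + p2.[t]); last by []. by rewrite hp hp2 addrA.
rewrite (@derive1_of _ _ _ D) /p /p2 !(derivD, derivC, derivZ, derivX) !hornerE /= ?mulr0 ?addr0.
by rewrite mulVf ?gt_eqF // mul1r mulr1.
Qed.


Lemma test2 (f : R -> R) (b k qj qi c : R) :
  (\forall s \near 0, f s = b - k * (qj - c * (s / (1 + s * qi)))) ->
  derive1 f 0 = k * c.
Proof.
move=> fE.
pose p : {poly R} := 1 + qi *: 'X.
have hp : forall t, p.[t] = 1 + t * qi.
  by move=> t; rewrite /p !hornerE mulrC.
pose g := cst b - k \*: (cst qj - c \*: (horner 'X * (fun s => (horner p s)^-1))).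
have D : is_derive (0:R) 1 g (k * c).
  have p0 : p.[0] != 0 by rewrite hp mul0r addr0 oner_eq0.
  have DV := is_deriveV p0 (is_derive_poly p 0).
  have DM := is_deriveM (is_derive_poly 'X 0) DV.
  have DZ := is_deriveZ c DM.
  have DB := is_deriveB (is_derive_cst qj (0:R) (1:R)) DZ.
  have DZ2 := is_deriveZ k DB.
  have DB2 := is_deriveB (is_derive_cst b (0:R) (1:R)) DZ2.
  apply: (is_derive_eq DB2).
  rewrite hornerX scale0r add0r hp mul0r addr0 invr1 derivX hornerC scale1r !sub0r.
  by rewrite add0r scalerN opprK /GRing.scale /= mulr1.
rewrite derive1E (@near_eq_derive _ _ _ f g).
  by rewrite -derive1E (@derive1_of _ _ _ D).
near=> s. rewrite (near fE s) //. rewrite /g.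
  transitivity (b - k * (qj - c * ((horner 'X s) * (p.[s])^-1))); last by [].
  by rewrite hornerX hp.
Unshelve. all: by end_near.
Qed.

End T.

Section Core.
Variables (R : realType) (M N : nat) (V : 'M[R]_(M, N)) (w u : 'rV[R]_M).
Hypothesis w0 : forall i, 0 <= w 0 i.
Hypothesis uG : Gmat V w \in unitmx.

Let G := Gmat V w.
Let P := invmx G.
Let D : 'M[R]_M := diag_mx (\row_i Num.sqrt (w 0 i)).

Lemma DD : D *m D = diag_mx w.
Proof.
rewrite /D mul_diag_mx; apply/matrixP=> i j; rewrite !mxE mulrnAr -expr2 sqr_sqrtr //.
Qed.

Lemma Dsym : D^T = D.
Proof. exact: tr_diag_mx. Qed.

Lemma Gsym : G^T = G.
Proof. by rewrite /G /Gmat !trmx_mul trmxK tr_diag_mx mulmxA. Qed.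

Lemma GD : G = V^T *m D *m (D *m V).
Proof. by rewrite /G /Gmat -DD !mulmxA. Qed.

Lemma Psym : P^T = P.
Proof. by rewrite /P trmx_inv Gsym. Qed.

Let C := D *m V *m P.
Let Y := V *m C^T.

Lemma Ct : C^T = P *m V^T *m D.
Proof. by rewrite /C !trmx_mul Psym Dsym mulmxA. Qed.

Lemma CtC : C^T *m C = P.
Proof.
transitivity (P *m G *m P); first by rewrite Ct /C GD !mulmxA.
by rewrite mulVmx // mul1mx.
Qed.


Let Q := V *m P *m V^T.
Let A := V^T *m diag_mx u *m V.
Let S := Y^T *m diag_mx u *m Y.

Lemma QY : Q = Y *m Y^T.
Proof.
have -> : Y *m Y^T = V *m (C^T *m C) *m V^T.
  by rewrite /Y [(V *m _)^T]trmx_mul trmxK !mulmxA.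
by rewrite CtC.
Qed.

Lemma SC : S = C *m A *m C^T.
Proof. by rewrite /S /Y /A [(V *m _)^T]trmx_mul trmxK !mulmxA. Qed.

Lemma AS : A = V^T *m D *m S *m (D *m V).
Proof.
transitivity (G *m P *m A *m (P *m G)).
  by rewrite mulmxV // mulVmx // mul1mx mulmx1.
by rewrite SC Ct /C GD !mulmxA.
Qed.

Lemma S0A0 : S = 0 <-> A = 0.
Proof.
split=> [S0|A0]; first by rewrite AS S0 mulmx0 mul0mx.
by rewrite SC A0 mulmx0 mul0mx.
Qed.

Lemma sumQS : \sum_i \sum_j u 0 i * (Q j i * Q i j) * u 0 j =
  \sum_k \sum_l S k l * S k l.
Proof.
have Qe : forall i j, Q i j = \sum_k Y i k * Y j k.
  by move=> i j; rewrite QY mxE; apply: eq_bigr => k _; rewrite [Y^T _ _]mxE.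
have Se : forall k l, S k l = \sum_i Y i k * u 0 i * Y i l.
  move=> k l; rewrite /S mul_mx_diag mxE; apply: eq_bigr => m _. by rewrite mxE [Y^T _ _]mxE.

rewrite [RHS](eq_bigr (fun k => \sum_l \sum_i \sum_j
    (Y i k * u 0 i * Y i l) * (Y j k * u 0 j * Y j l))); last first.
  by move=> k _; apply: eq_bigr => l _; rewrite Se big_distrlr.
symmetry.
under eq_bigr => k _ do rewrite exchange_big.
under eq_bigr => k _ do under eq_bigr => i _ do rewrite exchange_big.
rewrite exchange_big.
under eq_bigr => i _ do rewrite exchange_big.
symmetry.
apply: eq_bigr => i _; apply: eq_bigr => j _.
rewrite !Qe big_distrlr big_distrr big_distrl; apply: eq_bigr => k _.
rewrite big_distrr big_distrl; apply: eq_bigr => l _ /=.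
ring.
Qed.

Lemma core_iff : \sum_i \sum_j u 0 i * (Q j i * Q i j) * u 0 j = 0 <-> A = 0.
Proof.
rewrite sumQS -S0A0; split => [H|->]; last first.
  by rewrite big1 // => k _; rewrite big1 // => l _; rewrite mxE mulr0.
have ge0 : forall k l, 0 <= S k l * S k l by move=> k l; rewrite -expr2 sqr_ge0.
apply/matrixP => k l.
have Hk : \sum_l S k l * S k l = 0.
  apply: (psumr_eq0P _ H) => // i _; apply: sumr_ge0 => j _; exact: ge0.
have : S k l * S k l = 0 by apply: (psumr_eq0P _ Hk) => // j _; exact: ge0.
by move/eqP; rewrite mulf_eq0 orbb => /eqP ->; rewrite mxE.
Qed.

End Core.

Section Ana.
Variables (R : realType) (M N : nat) (V : 'M[R]_(M, N)).

Definition qf (w : 'rV[R]_M) (a b : 'I_M) :=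
  (row a V *m invmx (Gmat V w) *m (row b V)^T) 0 0.

Lemma unitG w : 0 < \det (Gmat V w) -> Gmat V w \in unitmx.
Proof. by move=> h; rewrite unitmxE unitfE gt_eqF. Qed.

Lemma partial_E w j : 0 < \det (Gmat V w) ->
  partial j (Efun V) w = 1 - N%:R^-1 * qf w j j.
Proof.
move=> dpos; rewrite /partial.
match goal with |- derive1 ?f 0 = _ => have -> : f = (fun t => - (N%:R^-1) *
   ln (\det (Gmat V w) * (1 + t * qf w j j)) + (\sum_i w 0 i + t)) end.
  by apply/funext => t; rewrite /Efun Gmat_shift det_rank1 ?unitG // sum_shift.
by rewrite test // mulNr addrC.
Qed.

Lemma hess_entry w i j : 0 < \det (Gmat V w) ->
  partial i (partial j (Efun V)) w = N%:R^-1 * (qf w j i * qf w i j).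
Proof.
move=> dpos; rewrite [partial i _ _]/partial.
apply: (@test2 _ _ 1 (N%:R^-1) (qf w j j) (qf w i i) (qf w j i * qf w i j)).
set qi := qf w i i.
have e0 : 0 < (`|qi| + 1)^-1 by rewrite invr_gt0; have := normr_ge0 qi; lra.
apply: filterS (nbhs0_lt e0) => s hs.
have pos : 0 < 1 + s * qi.
  have h1 : `|s| * (`|qi| + 1) < 1.
    by rewrite -ltr_pdivlMr ?mul1r //; have := normr_ge0 qi; lra.
  have h2 := ler_norm (- (s * qi)); rewrite normrN normrM in h2.
  have h3 := normr_ge0 s.
  nra.
have dpos' : 0 < \det (Gmat V (w + s *: @evec R M i)).
  by rewrite Gmat_shift det_rank1 ?unitG // mulr_gt0.
rewrite partial_E //; congr (_ - _ * _).
rewrite /qf Gmat_shift inv_rank1 ?unitG ?gt_eqF //.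
set P := invmx _; set rj := row j V; set ri := row i V; set c := s / _.
rewrite mulmxBr mulmxBl -scalemxAr -scalemxAl.
have -> : rj *m (P *m ri^T *m ri *m P) *m rj^T = (rj *m P *m ri^T) *m (ri *m P *m rj^T).
  by rewrite !mulmxA.
set X1 := rj *m P *m rj^T; set XX := rj *m P *m ri^T; set YY := ri *m P *m rj^T.
rewrite !mxE big_ord1 /XX /YY !mxE.
by rewrite mulrC.
Qed.

End Ana.

Theorem mainTheorem3 (R : realType) (n M N : nat)
    (x : 'I_M -> 'rV[R]_n) (phi : 'I_N -> 'rV[R]_n -> R) :
  injective x ->
  \rank (\matrix_(i < M, j < N) phi j (x i)) = N ->
  forall w u : 'rV[R]_M,
    (forall i, 0 <= w ord0 i) ->
    0 < \det (Gmat (\matrix_(i < M, j < N) phi j (x i)) w) ->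
    (hess_form (Efun (\matrix_(i < M, j < N) phi j (x i))) w u = 0 <->
     forall h k : 'I_N,
       \sum_(i < M) u ord0 i * phi h (x i) * phi k (x i) = 0).
Proof.
move=> _ _ w u w0 dpos.
set V := \matrix_(i < M, j < N) phi j (x i).
have uG : Gmat V w \in unitmx by apply: unitG.
set Q := V *m invmx (Gmat V w) *m V^T.
have qQ : forall a b, @qf _ _ _ V w a b = Q a b.
  move=> a b; rewrite /qf /Q mxE [RHS]mxE; apply: eq_bigr => k _.
  by rewrite -row_mul !mxE.
have Hf : hess_form (Efun V) w u =
    N%:R^-1 * \sum_i \sum_j u 0 i * (Q j i * Q i j) * u 0 j.
  rewrite /hess_form mxE [in RHS]exchange_big big_distrr; apply: eq_bigr => j _ /=.
  rewrite mxE big_distrl big_distrr; apply: eq_bigr => i _ /=.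
  rewrite /hessian [(\matrix_(_, _) _) i j]mxE [u^T j _]mxE hess_entry // !qQ.
  change (u ord0) with (u 0).
  ring.
have Hc := @core_iff _ _ _ V w u w0 uG.
have HA : (V^T *m diag_mx u *m V = 0) <->
    forall h k, \sum_(i < M) u ord0 i * phi h (x i) * phi k (x i) = 0.
  have E : forall h k, (V^T *m diag_mx u *m V) h k =
      \sum_(i < M) u ord0 i * phi h (x i) * phi k (x i).
    move=> h k; rewrite mul_mx_diag mxE; apply: eq_bigr => i _; rewrite !mxE.
    ring.
  split => [A0 h k|H]; first by rewrite -E A0 mxE.
  by apply/matrixP => h k; rewrite E H mxE.
have [N0|Npos] := eqVneq N 0%N.
  split => [_ h|_].
    by exfalso; move: (ltn_ord h); move: (nat_of_ord h) => m; rewrite N0.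
  rewrite Hf; have -> : (N%:R : R)^-1 = 0 by rewrite N0 invr0.
  by rewrite mul0r.
rewrite Hf -HA -Hc; split => [|->]; last by rewrite mulr0.
by move/eqP; rewrite mulf_eq0 invr_eq0 pnatr_eq0 (negbTE Npos) /= => /eqP.
Qed.
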